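(* Let $G$ be a finite graph. Then there exist a positive integer $n$ and a modular sumset labeling $f:V(G)\to\mathscr{P}(\mathbb{Z}_n)$ of $G$. Moreover, there exist a positive integer $n$ and a modular sumset indexer $f:V(G)\to\mathscr{P}(\mathbb{Z}_n)$ of $G$.
   Context: Graphs are simple and finite, without isolated vertices. For a positive integer $n$, $\mathbb{Z}_n$ denotes the set of non-negative integers modulo $n$ and $\mathscr{P}(\mathbb{Z}_n)$ its power set. For $A,B\subseteq\mathbb{Z}_n$ the modular sumset is $A+B=\{x\in\mathbb{Z}_n : x\equiv a+b \pmod n \text{ for some } a\in A,\ b\in B\}$. A modular sumset labeling of $G$ is an injective function $f:V(G)\to\mathscr{P}(\mathbb{Z}_n)$ assigning non-empty subsets to vertices, with induced edge function $f^+:E(G)\to\mathscr{P}(\mathbb{Z}_n)$, $f^+(uv)=f(u)+f(v)$. A modular sumset indexer is a modular sumset labeling $f$ whose induced function $f^+$ is also injective. *)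

(* Defs.v *)
From mathcomp Require Import all_boot.
Set Implicit Arguments. Unset Strict Implicit. Unset Printing Implicit Defensive.

Definition simple_graph (V : finType) (e : rel V) : Prop :=
  symmetric e /\ irreflexive e /\ (forall v : V, exists u : V, e v u).

(* Z_n represented as 'I_n = {0,...,n-1}; modular sumset. *)
Definition msumset (n : nat) (A B : {set 'I_n}) : {set 'I_n} :=
  [set x : 'I_n | [exists a in A, exists b in B, (nat_of_ord x == (a + b) %% n)%N]].

Definition modular_sumset_labeling (V : finType) (n : nat) (f : V -> {set 'I_n}) : Prop :=
  injective f /\ (forall v, f v != set0).

Definition modular_sumset_indexer (V : finType) (e : rel V) (n : nat)
    (f : V -> {set 'I_n}) : Prop :=
  modular_sumset_labeling f /\
  (forall u v x y : V, e u v -> e x y ->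
     msumset (f u) (f v) = msumset (f x) (f y) ->
     [set u; v] = [set x; y]).

(* Main.v *)
Require Import Defs.
From mathcomp Require Import all_boot.
From mathcomp Require Import zify.

Section S.
Variable V : finType.
Let N := (4 * #|V| + 3).+1.
Definition rr (v : V) : nat := (enum_rank v : nat).+1.
Lemma rr_lt v : rr v <= #|V|.
Proof. rewrite /rr; exact: ltn_ord (enum_rank v). Qed.
Definition ff (v : V) : {set 'I_N} := [set (inord 0 : 'I_N); inord (rr v)].
Lemma mem_ff v (y : 'I_N) : (y \in ff v) = ((y : nat) == 0) || ((y : nat) == rr v).
Proof.
rewrite !inE -!val_eqE /= !inordK //; have := rr_lt v; rewrite /N; lia.
Qed.
Definition PP a b (y : nat) := [|| y == 0, y == a, y == b | y == a + b].
Lemma mem_sum u v (y : 'I_N) : (y \in msumset (ff u) (ff v)) = PP (rr u) (rr v) y.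
Proof.
have hu := rr_lt u; have hv := rr_lt v.
rewrite /msumset inE; apply/existsP/idP.
- case=> a /andP [ha /existsP [b /andP [hb /eqP ->]]].
  move: ha hb; rewrite !mem_ff /PP => ha hb.
  rewrite modn_small; last by (have := ltn_ord a; have := ltn_ord b; move: ha hb; rewrite /N; lia).
  move: ha hb; lia.
- rewrite /PP => H.
  have Ha : forall t, t <= #|V| -> t < N by move=> t; rewrite /N; lia.
  have m0 : (inord 0 : 'I_N) = Ordinal (Ha 0 (leq0n _)) by apply/val_inj; rewrite /= inordK.
  case/or4P: H => /eqP ->.
  + exists (inord 0); rewrite mem_ff inordK //= ; apply/existsP; exists (inord 0).
    by rewrite mem_ff inordK //= mod0n.
  + exists (inord (rr u)); rewrite mem_ff inordK ?Ha // eqxx orbT /=; apply/existsP; exists (inord 0).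
    rewrite mem_ff !inordK ?Ha //= addn0 modn_small ?Ha //.
  + exists (inord 0); rewrite mem_ff inordK //=; apply/existsP; exists (inord (rr v)).
    rewrite mem_ff inordK ?Ha // eqxx orbT /= modn_small ?Ha //.
  + exists (inord (rr u)); rewrite mem_ff inordK ?Ha // eqxx orbT /=; apply/existsP; exists (inord (rr v)).
    rewrite mem_ff inordK ?Ha // eqxx orbT /= modn_small //; rewrite /N; lia.
Qed.
Lemma rr_inj : injective rr.
Proof. move=> u v [] /val_inj; exact: enum_rank_inj. Qed.
End S.
Arguments rr {V}. Arguments ff {V}. Arguments rr_lt {V}. Arguments mem_ff {V}. Arguments mem_sum {V}. Arguments rr_inj {V}.

Lemma step a c d : PP c d a -> 0 < a -> 0 < c -> 0 < d -> minn c d <= a /\ a <= c + d.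
Proof. rewrite /PP; case/or4P => /eqP ->; lia. Qed.

Theorem mainTheorem1 (V : finType) (e : rel V) :
  simple_graph e ->
  (exists (n : nat) (f : V -> {set 'I_n}), 0 < n /\ modular_sumset_labeling f) /\
  (exists (n : nat) (f : V -> {set 'I_n}), 0 < n /\ modular_sumset_indexer e f).
Proof.
move=> [_ [irr _]].
have lab : modular_sumset_labeling (@ff V).
  split.
  - move=> u v h; apply: rr_inj.
    have hu := rr_lt u; have hv := rr_lt v.
    have : (inord (rr u) : 'I_(4 * #|V| + 3).+1) \in ff v by rewrite -h mem_ff inordK ?eqxx ?orbT //; lia.
    rewrite mem_ff inordK; last by lia.
    rewrite /rr; lia.
  - move=> v; apply/set0Pn; exists (inord 0); by rewrite mem_ff inordK.
split; exists (4 * #|V| + 3).+1, (@ff V); split => //.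
split => // u v x y euv exy h.
have nuv : u != v by apply/eqP => E; move: euv; rewrite E irr.
have nxy : x != y by apply/eqP => E; move: exy; rewrite E irr.
have nab : rr u != rr v by apply/contra: nuv => /eqP /rr_inj ->.
have ncd : rr x != rr y by apply/contra: nxy => /eqP /rr_inj ->.
have hu := rr_lt u; have hv := rr_lt v; have hx := rr_lt x; have hy := rr_lt y.
have key : forall t, t <= 2 * #|V| -> PP (rr u) (rr v) t = PP (rr x) (rr y) t.
  move=> t ht; have := mem_sum u v (inord t); rewrite h mem_sum inordK; last by lia.
  by move=> ->.
have pos : 0 < rr u /\ 0 < rr v /\ 0 < rr x /\ 0 < rr y by rewrite /rr.
case: pos => pu [pv [px py]].
have b1 : forall a, a <= #|V| -> a <= 2 * #|V| by move=> a; lia.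
have b2 : forall a b, a <= #|V| -> b <= #|V| -> a + b <= 2 * #|V| by move=> a b; lia.
have s1 : minn (rr x) (rr y) <= rr u /\ rr u <= rr x + rr y.
  by apply: step => //; rewrite -key ?b1 // /PP eqxx !orbT.
have s2 : minn (rr x) (rr y) <= rr v /\ rr v <= rr x + rr y.
  by apply: step => //; rewrite -key ?b1 // /PP eqxx !orbT.
have s3 : minn (rr x) (rr y) <= rr u + rr v /\ rr u + rr v <= rr x + rr y.
  by apply: step; rewrite ?addn_gt0 ?pu ?pv // -key ?b2 // /PP eqxx !orbT.
have s4 : minn (rr u) (rr v) <= rr x /\ rr x <= rr u + rr v.
  by apply: step => //; rewrite key ?b1 // /PP eqxx !orbT.
have s5 : minn (rr u) (rr v) <= rr y /\ rr y <= rr u + rr v.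
  by apply: step => //; rewrite key ?b1 // /PP eqxx !orbT.
have s6 : minn (rr u) (rr v) <= rr x + rr y /\ rr x + rr y <= rr u + rr v.
  by apply: step; rewrite ?addn_gt0 ?px ?py // key ?b2 // /PP eqxx !orbT.
have [[E1 E2]|[E1 E2]] : (rr u = rr x /\ rr v = rr y) \/ (rr u = rr y /\ rr v = rr x).
  move: s1 s2 s3 s4 s5 s6 nab ncd pu pv px py; clear.
  move: (rr u) (rr v) (rr x) (rr y) => a b c d; lia.
- by rewrite (rr_inj _ _ E1) (rr_inj _ _ E2).
- by rewrite (rr_inj _ _ E1) (rr_inj _ _ E2) setUC.
Qed.
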